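(* Consider the Diophantine equation $n^2-(6s-1)n+6s^2=0$ in positive integers $(n,s)$. The maps $\iota_1(n,s)=(n,n-s)$ and $\iota_2(n,s)=(6s-1-n,s)$ send positive integer solutions to positive integer solutions, and the set of all positive integer solutions is exactly the set of pairs obtained from $(2,1)$ by finitely many applications of $\iota_1$ and $\iota_2$; that is, the solutions are $(2,1),(3,1),(3,2),(8,2),(8,6),(27,6),(27,21),(98,21),(98,77),(363,77),(363,286),\dots$, obtained by alternately applying $\iota_2$ and $\iota_1$ starting from $(2,1)$. *)

(* Defs.v *)
From Stdlib Require Import ZArith List Lia.
Open Scope Z_scope.

Definition sol (p : Z * Z) : Prop :=
  let (n, s) := p in
  0 < n /\ 0 < s /\ n ^ 2 - (6 * s - 1) * n + 6 * s ^ 2 = 0.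

Definition iota1 (p : Z * Z) : Z * Z := (fst p, fst p - snd p).

Definition iota2 (p : Z * Z) : Z * Z := (6 * snd p - 1 - fst p, snd p).

(* Apply a finite word of involutions: true = iota1, false = iota2;
   the head of the list is applied last. *)
Fixpoint apply_word (w : list bool) (p : Z * Z) : Z * Z :=
  match w with
  | nil => p
  | b :: w' => (if b then iota1 else iota2) (apply_word w' p)
  end.

Fixpoint alt (k : nat) : Z * Z :=
  match k with
  | O => (2, 1)
  | S k' => (if Nat.even k' then iota2 else iota1) (alt k')
  end.

(* Main.v *)
Require Import Defs.
From Stdlib Require Import ZArith List Lia.
Open Scope Z_scope.

Lemma i1_sol : forall p : Z * Z, sol p -> sol (iota1 p).
Proof.
  intros [n s] [Hn [Hs E]]; unfold iota1, sol; cbn [fst snd]; rewrite !Z.pow_2_r in *.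
  split; [|split]; [lia| |nia].
  assert (n - s <= 0 -> False) by nia. lia.
Qed.

Lemma i2_sol : forall p : Z * Z, sol p -> sol (iota2 p).
Proof.
  intros [n s] [Hn [Hs E]]; unfold iota2, sol; cbn [fst snd]; rewrite !Z.pow_2_r in *.
  split; [|split]; [|lia|nia].
  assert (6*s-1-n <= 0 -> False) by nia. lia.
Qed.

Lemma i1_inv p : iota1 (iota1 p) = p.
Proof. destruct p; unfold iota1; simpl; f_equal; lia. Qed.
Lemma i2_inv p : iota2 (iota2 p) = p.
Proof. destruct p; unfold iota2; simpl; f_equal; lia. Qed.

Lemma alt_closed k :
  (exists j, iota1 (alt k) = alt j) /\ (exists j, iota2 (alt k) = alt j).
Proof.
  destruct k as [|k].
  - split; [exists 0%nat | exists 1%nat]; reflexivity.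
  - assert (Hs : alt (S (S k)) = (if Nat.even k then iota1 else iota2) (alt (S k))).
    { change (alt (S (S k))) with ((if Nat.even (S k) then iota2 else iota1) (alt (S k))).
      rewrite Nat.even_succ, <- Nat.negb_even. destruct (Nat.even k); reflexivity. }
    change (alt (S k)) with ((if Nat.even k then iota2 else iota1) (alt k)) at 1 2.
    change (alt (S k)) with ((if Nat.even k then iota2 else iota1) (alt k)) in Hs.
    destruct (Nat.even k).
    + split; [exists (S (S k)); now rewrite Hs | exists k; apply i2_inv].
    + split; [exists k; apply i1_inv | exists (S (S k)); now rewrite Hs].
Qed.

Lemma alt_sol k : sol (alt k).
Proof.
  induction k as [|k IH]; simpl.
  - unfold sol; lia.
  - destruct (Nat.even k); [apply i2_sol | apply i1_sol]; auto.
Qed.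

Lemma sol_alt_aux (N : nat) : forall n s, sol (n, s) -> (Z.to_nat (n + s) <= N)%nat ->
  exists k, (n, s) = alt k.
Proof.
  induction N as [|N IH]; intros n s [Hn [Hs E]] HN.
  - lia.
  - destruct (Z_lt_le_dec n (2*s)) as [H1|H1].
    + (* iota1 decreases *)
      assert (Hq : sol (n, n - s)) by (apply (i1_sol (n,s)); unfold sol; auto).
      destruct (IH n (n - s) Hq) as [k Hk]; [lia|].
      destruct (alt_closed k) as [[j Hj] _]. exists j. rewrite <- Hj, <- Hk.
      unfold iota1; simpl; f_equal; lia.
    + destruct (Z.eq_dec s 1) as [Hs1|Hs1].
      * subst s. assert (n = 2 \/ n = 3) as [->| ->] by nia.
        -- exists 0%nat; reflexivity.
        -- exists 1%nat; reflexivity.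
      * assert (H3 : 3*s <= n) by nia.
        assert (Hq : sol (6*s-1-n, s)) by (apply (i2_sol (n,s)); unfold sol; auto).
        destruct Hq as [Hq1 Hq2].
        destruct (IH (6*s-1-n) s) as [k Hk]; [unfold sol; auto|lia|].
        destruct (alt_closed k) as [_ [j Hj]]. exists j. rewrite <- Hj, <- Hk.
        unfold iota2; simpl; f_equal; lia.
Qed.

Lemma alt_word k : exists w, alt k = apply_word w (2,1).
Proof.
  induction k as [|k [w Hw]].
  - exists nil; reflexivity.
  - exists (negb (Nat.even k) :: w). simpl. rewrite Hw.
    destruct (Nat.even k); reflexivity.
Qed.

Lemma word_sol w : sol (apply_word w (2,1)).
Proof.
  induction w as [|b w IH]; simpl.
  - unfold sol; lia.
  - destruct b; [apply i1_sol | apply i2_sol]; auto.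
Qed.

Theorem mainTheorem10 :
  (forall p : Z * Z, sol p -> sol (iota1 p)) /\
  (forall p : Z * Z, sol p -> sol (iota2 p)) /\
  (forall p : Z * Z, sol p <-> exists w : list bool, p = apply_word w (2, 1)) /\
  (forall p : Z * Z, sol p <-> exists k : nat, p = alt k).
Proof.
  assert (SA : forall p, sol p -> exists k, p = alt k).
  { intros [n s] H. exact (sol_alt_aux _ n s H (le_n _)). }
  split; [exact i1_sol|]. split; [exact i2_sol|]. split.
  - intros p; split.
    + intros H. destruct (SA p H) as [k ->]. destruct (alt_word k) as [w Hw]. eauto.
    + intros [w ->]. apply word_sol.
  - intros p; split; [apply SA|]. intros [k ->]. apply alt_sol.
Qed.
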